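(* Let $A \in \mathbb{R}^{m\times n}$ have rank $r \ge 1$ with condition number $\kappa_2(A) = \|A\|_2/\sigma_r$, $\sigma_r$ its smallest nonzero singular value. Let $\bar{b} \in \mathcal{R}(A)$, $\bar b\neq 0$ (i.e. $\bar{b}|_{\mathcal{R}(A)^\perp} = 0$), let $E_2 \in \mathbb{R}^{m\times n}$ and $\delta b \in \mathbb{R}^m$ be perturbations, and set $\tilde{A} = A$, $\tilde{B} = A^{\mathsf{T}} + E_2^{\mathsf{T}}$, $b = \bar{b} + \delta b$. Let $x_{\min} = A^{\dagger}\bar{b}$ and define $\delta x_{\min}$ by $x_{\min} + \delta x_{\min} = (\tilde{B}\tilde{A})^{\dagger}\tilde{B}\, b$. Assume $\tilde{B}$ is an acute perturbation of $A^{\mathsf{T}}$, i.e. $\| P_{\mathcal{R}(\tilde{B})} - P_{\mathcal{R}(A^{\mathsf{T}})} \|_2 < 1$ and $\| P_{\mathcal{R}(\tilde{B}^{\mathsf{T}})} - P_{\mathcal{R}(A)} \|_2 < 1$. Then, to first order in the perturbations $(E_2, \delta b)$ (neglecting terms of second and higher order), \[ \frac{\| \delta x_{\min} \|_2}{\| x_{\min} \|_2} \leq \kappa_2(A) \frac{\| \delta b|_{\mathcal{R}(A)} \|_2}{\| \bar{b} \|_2}. \]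
   Context: $\mathcal{R}(\cdot)$ denotes the range of a matrix, $P_{\mathcal{S}}$ the orthogonal projection onto a subspace $\mathcal{S}$, $v|_{\mathcal{S}}$ the orthogonal projection of a vector $v$ onto $\mathcal{S}$, and $\dagger$ the Moore–Penrose pseudoinverse. *)

(* Defs.v *)
From HB Require Import structures.
From mathcomp Require Import all_boot all_order all_algebra.
From mathcomp Require Import classical_sets reals.
From Stdlib Require Import ClassicalEpsilon.
Set Implicit Arguments. Unset Strict Implicit. Unset Printing Implicit Defensive.
Import Order.TTheory GRing.Theory Num.Theory.
Local Open Scope ring_scope.
Local Open Scope classical_set_scope.

Section Defs.
Variable R : realType.

Definition vnorm (k : nat) (v : 'cV[R]_k) : R :=
  Num.sqrt (\sum_(i < k) v i 0 ^+ 2).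

Definition specnorm (p q : nat) (M : 'M[R]_(p, q)) : R :=
  sup [set vnorm (M *m v) | v in [set v : 'cV[R]_q | vnorm v <= 1]].

Definition penrose (p q : nat) (M : 'M[R]_(p, q)) (X : 'M[R]_(q, p)) : Prop :=
  [/\ M *m X *m M = M, X *m M *m X = X,
      (M *m X)^T = M *m X & (X *m M)^T = X *m M].

Definition pinv (p q : nat) (M : 'M[R]_(p, q)) : 'M[R]_(q, p) :=
  epsilon (inhabits 0) (penrose M).

Definition in_range (p q : nat) (M : 'M[R]_(p, q)) (v : 'cV[R]_p) : Prop :=
  exists y : 'cV[R]_q, v = M *m y.

(* orthogonal projector onto R(M): the symmetric idempotent P whose column
   space equals the column space of M *)
Definition is_orth_proj_range (p q : nat) (M : 'M[R]_(p, q)) (P : 'M[R]_p) : Prop :=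
  [/\ P *m P = P, P^T = P & (P^T == M^T)%MS].

Definition proj_range (p q : nat) (M : 'M[R]_(p, q)) : 'M[R]_p :=
  epsilon (inhabits 0) (is_orth_proj_range M).

(* singular values = square roots of the eigenvalues of M^T M;
   smallest nonzero singular value sigma_r *)
Definition sigma_min_nz (p q : nat) (M : 'M[R]_(p, q)) : R :=
  Num.sqrt (inf [set l : R | 0 < l /\ eigenvalue (M^T *m M) l]).

Definition kappa2 (p q : nat) (M : 'M[R]_(p, q)) : R :=
  specnorm M / sigma_min_nz M.

End Defs.

(* Main.v *)
Require Import Defs.
From HB Require Import structures.
From mathcomp Require Import all_boot all_order all_algebra.
From mathcomp Require Import classical_sets reals.
From mathcomp Require Import ring lra.
From Stdlib Require Import ClassicalEpsilon.
Import Order.TTheory GRing.Theory Num.Theory.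
Local Open Scope ring_scope.
Set Implicit Arguments. Unset Strict Implicit. Unset Printing Implicit Defensive.
Local Open Scope classical_set_scope.

Definition dot (R : realType) k (u v : 'cV[R]_k) : R := (u^T *m v) 0 0.

Lemma dotE (R : realType) k (u v : 'cV[R]_k) : dot u v = \sum_i u i 0 * v i 0.
Proof. by rewrite /dot mxE; apply: eq_bigr => i _; rewrite mxE. Qed.

Lemma dotC (R : realType) k (u v : 'cV[R]_k) : dot u v = dot v u.
Proof. by rewrite !dotE; apply: eq_bigr => i _; rewrite mulrC. Qed.

Lemma dotDl (R : realType) k (u w v : 'cV[R]_k) : dot (u + w) v = dot u v + dot w v.
Proof. by rewrite /dot linearD /= mulmxDl mxE. Qed.

Lemma dotDr (R : realType) k (u w v : 'cV[R]_k) : dot v (u + w) = dot v u + dot v w.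
Proof. by rewrite /dot mulmxDr mxE. Qed.

Lemma dotZl (R : realType) k a (u v : 'cV[R]_k) : dot (a *: u) v = a * dot u v.
Proof. by rewrite /dot linearZ /= -scalemxAl mxE. Qed.

Lemma dotZr (R : realType) k a (u v : 'cV[R]_k) : dot v (a *: u) = a * dot v u.
Proof. by rewrite /dot -scalemxAr mxE. Qed.

Lemma dotNl (R : realType) k (u v : 'cV[R]_k) : dot (- u) v = - dot u v.
Proof. by rewrite -scaleN1r dotZl mulN1r. Qed.

Lemma dotNr (R : realType) k (u v : 'cV[R]_k) : dot v (- u) = - dot v u.
Proof. by rewrite -scaleN1r dotZr mulN1r. Qed.

Lemma dotBl (R : realType) k (u w v : 'cV[R]_k) : dot (u - w) v = dot u v - dot w v.
Proof. by rewrite dotDl dotNl. Qed.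

Lemma dotBr (R : realType) k (u w v : 'cV[R]_k) : dot v (u - w) = dot v u - dot v w.
Proof. by rewrite dotDr dotNr. Qed.

Lemma dot0l (R : realType) k (v : 'cV[R]_k) : dot 0 v = 0.
Proof. by rewrite /dot linear0 mul0mx mxE. Qed.

Lemma dot0r (R : realType) k (v : 'cV[R]_k) : dot v 0 = 0.
Proof. by rewrite /dot mulmx0 mxE. Qed.

Lemma dotMl (R : realType) k l (M : 'M[R]_(k, l)) u v : dot (M *m u) v = dot u (M^T *m v).
Proof. by rewrite /dot trmx_mul mulmxA. Qed.

Lemma dotMr (R : realType) k l (M : 'M[R]_(k, l)) u v : dot u (M *m v) = dot (M^T *m u) v.
Proof. by rewrite dotMl trmxK. Qed.

Lemma dot_ge0 (R : realType) k (v : 'cV[R]_k) : 0 <= dot v v.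
Proof. by rewrite dotE; apply: sumr_ge0 => i _; rewrite -expr2 sqr_ge0. Qed.

Lemma dot_eq0 (R : realType) k (v : 'cV[R]_k) : dot v v = 0 -> v = 0.
Proof.
rewrite dotE => /eqP; rewrite psumr_eq0; last by move=> i _; rewrite -expr2 sqr_ge0.
move=> /allP H; apply/matrixP => i j; rewrite (ord1 j) mxE.
by have := H i (mem_index_enum i); rewrite implyTb -expr2 sqrf_eq0 => /eqP.
Qed.

Lemma vnormE (R : realType) k (v : 'cV[R]_k) : vnorm v = Num.sqrt (dot v v).
Proof. by rewrite /vnorm dotE; congr Num.sqrt; apply: eq_bigr => i _; rewrite expr2. Qed.

Lemma vnorm_ge0 (R : realType) k (v : 'cV[R]_k) : 0 <= vnorm v.
Proof. by rewrite vnormE sqrtr_ge0. Qed.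

Lemma vnorm_sq (R : realType) k (v : 'cV[R]_k) : vnorm v ^+ 2 = dot v v.
Proof. by rewrite vnormE sqr_sqrtr // dot_ge0. Qed.

Lemma vnorm_eq0 (R : realType) k (v : 'cV[R]_k) : vnorm v = 0 -> v = 0.
Proof. by move=> h; apply: dot_eq0; rewrite -vnorm_sq h expr0n. Qed.

Lemma vnorm_gt0 (R : realType) k (v : 'cV[R]_k) : v != 0 -> 0 < vnorm v.
Proof.
move=> nz; rewrite lt_def vnorm_ge0 andbT; apply/eqP => /vnorm_eq0 h.
by rewrite h eqxx in nz.
Qed.

Lemma vnormZ (R : realType) k a (v : 'cV[R]_k) : vnorm (a *: v) = `|a| * vnorm v.
Proof.
by rewrite !vnormE dotZl dotZr mulrA -expr2 sqrtrM ?sqr_ge0 // sqrtr_sqr.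
Qed.

Lemma quad_disc (R : realType) (a b c : R) : 0 <= c ->
  (forall t, 0 <= a + 2 * b * t + c * t ^+ 2) -> b ^+ 2 <= a * c.
Proof.
move=> c0 H.
have [cz|cp] := eqVneq c 0.
  subst c; have [bz|bn] := eqVneq b 0; first by subst b; rewrite expr0n mulr0.
  have := H (- (a + 1) / (2 * b)).
  have e : 2 * b * (- (a + 1) / (2 * b)) = - (a + 1).
    field. rewrite ?pnatr_eq0 ?bn //=.
  rewrite e; lra.
have cpos : 0 < c by rewrite lt_def cp c0.
have := H (- b / c).
have e : a + 2 * b * (- b / c) + c * (- b / c) ^+ 2 = a - b ^+ 2 / c.
  by field.
rewrite e subr_ge0 ler_pdivrMr //.
Qed.

Lemma psd_cs (R : realType) k (T : 'M[R]_k) (x y : 'cV[R]_k) : T^T = T ->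
  (forall t : R, 0 <= dot (x + t *: y) (T *m (x + t *: y))) ->
  0 <= dot y (T *m y) ->
  dot x (T *m y) ^+ 2 <= dot x (T *m x) * dot y (T *m y).
Proof.
move=> sT H yp; apply: quad_disc => // t.
have := H t.
have e : dot y (T *m x) = dot x (T *m y) by rewrite dotMr sT dotC.
rewrite mulmxDr -scalemxAr !dotDl !dotDr !dotZl !dotZr e.
match goal with |- is_true (0 <= ?X) -> is_true (0 <= ?Y) => have -> : Y = X by ring end; done.
Qed.

Lemma cs_sq (R : realType) k (x y : 'cV[R]_k) : dot x y ^+ 2 <= dot x x * dot y y.
Proof.
have := @psd_cs R k 1%:M x y (trmx1 _ _).
rewrite !mul1mx; apply; [move=> t; rewrite mul1mx|]; exact: dot_ge0.
Qed.

Lemma cs (R : realType) k (x y : 'cV[R]_k) : dot x y <= vnorm x * vnorm y.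
Proof.
rewrite !vnormE -sqrtrM ?dot_ge0 //.
apply: (le_trans (ler_norm _)); rewrite -sqrtr_sqr.
by apply: ler_wsqrtr; exact: cs_sq.
Qed.

Lemma vnormD (R : realType) k (x y : 'cV[R]_k) : vnorm (x + y) <= vnorm x + vnorm y.
Proof.
rewrite -(ler_pXn2r (_ : (0 < 2)%N)) ?nnegrE ?addr_ge0 ?vnorm_ge0 //.
rewrite vnorm_sq dotDl !dotDr sqrrD !vnorm_sq (dotC y x).
have := cs x y; lra.
Qed.

Lemma crude_sq (R : realType) p q (M : 'M[R]_(p, q)) :
  exists K : R, 0 < K /\ forall x, dot (M *m x) (M *m x) <= K * dot x x.
Proof.
pose r (i : 'I_p) : 'cV[R]_q := (row i M)^T.
exists (1 + \sum_i dot (r i) (r i)); split.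
  by rewrite ltr_pwDl // sumr_ge0 // => i _; exact: dot_ge0.
move=> x.
have e : forall i, (M *m x) i 0 = dot (r i) x.
  by move=> i; rewrite mxE dotE; apply: eq_bigr => j _; rewrite !mxE.
rewrite dotE (eq_bigr (fun i => dot (r i) x ^+ 2)); last by move=> i _; rewrite e expr2.
rewrite mulrDl mul1r mulr_suml.
apply: le_trans (_ : _ <= \sum_i dot (r i) (r i) * dot x x) _.
  by apply: ler_sum => i _; apply: cs_sq.
by rewrite lerDr dot_ge0.
Qed.

Lemma crude (R : realType) p q (M : 'M[R]_(p, q)) :
  exists K : R, 0 < K /\ forall x, vnorm (M *m x) <= K * vnorm x.
Proof.
have [K [K0 HK]] := crude_sq M; exists (Num.sqrt K); split; first by rewrite sqrtr_gt0.
move=> x; rewrite !vnormE -sqrtrM; [exact: ler_wsqrtr | exact: ltW].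
Qed.

Lemma specnorm_ub (R : realType) p q (M : 'M[R]_(p, q)) (x : 'cV[R]_q) :
  vnorm (M *m x) <= specnorm M * vnorm x.
Proof.
set E := [set vnorm (M *m v) | v in [set v : 'cV[R]_q | vnorm v <= 1]].
have hs : has_sup E.
  split; first by exists (vnorm (M *m 0)); exists 0 => //=; rewrite /vnorm big1 ?sqrtr0 // => i _; rewrite mxE expr0n.
  have [K [K0 HK]] := crude M; exists K => y [v /= v1 <-].
  by apply: le_trans (HK v) _; rewrite ler_piMr // ltW.
have [->|nz] := eqVneq x 0.
  by rewrite mulmx0 /vnorm !big1 ?sqrtr0 ?mulr0 // => i _; rewrite mxE expr0n.
have np := vnorm_gt0 nz.
have hi : 0 <= (vnorm x)^-1 by rewrite invr_ge0 vnorm_ge0.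
have : E (vnorm (M *m ((vnorm x)^-1 *: x))).
  exists ((vnorm x)^-1 *: x) => //=.
  by rewrite vnormZ ger0_norm // mulVf // gt_eqF.
move=> /(sup_upper_bound hs); rewrite -scalemxAr vnormZ ger0_norm //.
by rewrite mulrC -ler_pdivlMr ?invr_gt0 // invrK.
Qed.

Lemma specnorm_ge0 (R : realType) p q (M : 'M[R]_(p, q)) : 0 <= specnorm M.
Proof.
set E := [set vnorm (M *m v) | v in [set v : 'cV[R]_q | vnorm v <= 1]].
have hs : has_sup E.
  split; first by exists (vnorm (M *m 0)); exists 0 => //=; rewrite /vnorm big1 ?sqrtr0 // => i _; rewrite mxE expr0n.
  have [K [K0 HK]] := crude M; exists K => y [v /= v1 <-].
  by apply: le_trans (HK v) _; rewrite ler_piMr // ltW.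
have : E (vnorm (M *m 0)).
  by exists 0 => //=; rewrite /vnorm big1 ?sqrtr0 // => i _; rewrite mxE expr0n.
move=> /(sup_upper_bound hs); apply: le_trans; exact: vnorm_ge0.
Qed.

Lemma sq_le (R : realType) (a c : R) : 0 <= a -> 0 <= c -> a ^+ 2 <= c * a -> a <= c.
Proof.
move=> a0 c0; have [->|anz] := eqVneq a 0; first by [].
have ap : 0 < a by rewrite lt_def anz a0.
by rewrite expr2 (mulrC c) ler_pM2l.
Qed.

Lemma specnorm_tr_ub (R : realType) p q (M : 'M[R]_(p, q)) (x : 'cV[R]_p) :
  vnorm (M^T *m x) <= specnorm M * vnorm x.
Proof.
have h1 : vnorm (M^T *m x) ^+ 2 <= vnorm x * (specnorm M * vnorm (M^T *m x)).
  rewrite vnorm_sq dotMl trmxK; apply: le_trans (cs _ _) _.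
  by apply: ler_wpM2l; [exact: vnorm_ge0 | exact: specnorm_ub].
apply: sq_le; first exact: vnorm_ge0.
  by rewrite mulr_ge0 ?specnorm_ge0 ?vnorm_ge0.
by rewrite (mulrC (specnorm M)) -mulrA.
Qed.

Lemma proj_ub (R : realType) k (P : 'M[R]_k) x : P^T = P -> P *m P = P ->
  vnorm (P *m x) <= vnorm x.
Proof.
move=> sP iP.
have h1 : vnorm (P *m x) ^+ 2 <= vnorm x * vnorm (P *m x).
  by rewrite vnorm_sq dotMl sP mulmxA iP; apply: cs.
by apply: sq_le => //; exact: vnorm_ge0.
Qed.

Lemma ker_or_unit (R : realType) k (M : 'M[R]_k) :
  M \in unitmx \/ exists x : 'cV[R]_k, x != 0 /\ M *m x = 0.
Proof.
case uM: (M \in unitmx); first by left.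
right; move: uM; rewrite -unitmx_tr -row_free_unit => /negbT.
rewrite -kermx_eq0 => /rowV0Pn [v]; rewrite sub_kermx => /eqP vM vnz.
exists v^T; split; first by rewrite trmx_eq0.
by rewrite -(trmxK M) -trmx_mul vM trmx0.
Qed.

Lemma unit_of_inj (R : realType) k (M : 'M[R]_k) :
  (forall x : 'cV[R]_k, M *m x = 0 -> x = 0) -> M \in unitmx.
Proof.
move=> H; case: (ker_or_unit M) => // -[x [nz /H e]].
by rewrite e eqxx in nz.
Qed.

Lemma penrose_ex (R : realType) p q (M : 'M[R]_(p, q)) : exists X, penrose M X.
Proof.
have [F [G [hM [FinjT Ginj]]]] : exists (F : 'M[R]_(p, \rank M)) (G : 'M[R]_(\rank M, q)),
    F *m G = M /\ row_free F^T /\ row_free G.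
  exists (col_base M), (row_base M); split; first by rewrite mulmx_base.
  split; last exact: row_base_free.
  by rewrite /row_free mxrank_tr; exact: col_base_full.
set FF := F^T *m F; set GG := G *m G^T.
have uFF : FF \in unitmx.
  apply: unit_of_inj => x Hx.
  have Hx' : F^T *m F *m x = 0 := Hx.
  have h : dot (F *m x) (F *m x) = 0 by rewrite dotMl mulmxA Hx' dot0r.
  have := dot_eq0 h => Fx.
  apply: trmx_inj; rewrite trmx0; apply: (row_free_inj FinjT).
  by rewrite mul0mx -trmx_mul Fx trmx0.
have uGG : GG \in unitmx.
  apply: unit_of_inj => x Hx.
  have Hx' : G *m G^T *m x = 0 := Hx.
  have h : dot (G^T *m x) (G^T *m x) = 0 by rewrite dotMl trmxK mulmxA Hx' dot0r.
  have := dot_eq0 h => Gx.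
  apply: trmx_inj; rewrite trmx0; apply: (row_free_inj Ginj).
  by rewrite mul0mx -(trmxK G) -trmx_mul Gx trmx0.
have sFF : FF^T = FF by rewrite /FF trmx_mul trmxK.
have sGG : GG^T = GG by rewrite /GG trmx_mul trmxK.
set X := G^T *m invmx GG *m invmx FF *m F^T.
have MX : M *m X = F *m invmx FF *m F^T.
  rewrite (_ : M *m X = F *m G *m X); last by rewrite hM.
  rewrite (_ : F *m G *m X = F *m (GG *m invmx GG) *m invmx FF *m F^T); last by rewrite /X /GG !mulmxA.
  by rewrite mulmxV // mulmx1.
have XM : X *m M = G^T *m invmx GG *m G.
  rewrite (_ : X *m M = X *m (F *m G)); last by rewrite hM.
  rewrite (_ : X *m (F *m G) = G^T *m invmx GG *m (invmx FF *m FF) *m G); last by rewrite /X /FF !mulmxA.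
  by rewrite mulVmx // mulmx1.
exists X; split.
- rewrite MX; rewrite (_ : F *m invmx FF *m F^T *m M = F *m invmx FF *m F^T *m (F *m G)); last by rewrite hM.
  rewrite (_ : F *m invmx FF *m F^T *m (F *m G) = F *m (invmx FF *m FF) *m G); last by rewrite /FF !mulmxA.
  by rewrite mulVmx // mulmx1 hM.
- rewrite XM (_ : G^T *m invmx GG *m G *m X = G^T *m (invmx GG *m GG) *m invmx GG *m invmx FF *m F^T); last by rewrite /X /GG !mulmxA.
  by rewrite mulVmx // mulmx1.
- rewrite MX; clearbody FF; by rewrite !trmx_mul trmxK trmx_inv sFF !mulmxA.
- rewrite XM; clearbody GG; by rewrite !trmx_mul trmxK trmx_inv sGG !mulmxA.
Qed.

Lemma pinv_spec (R : realType) p q (M : 'M[R]_(p, q)) : penrose M (pinv M).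
Proof. rewrite /pinv; apply: epsilon_spec; exact: penrose_ex. Qed.

Lemma pen_XM_tr (R : realType) p q (M : 'M[R]_(p, q)) X : penrose M X ->
  X *m M = M^T *m X^T.
Proof. by case=> _ _ _ h; rewrite -{1}h trmx_mul. Qed.

Lemma pen_X_range (R : realType) p q (M : 'M[R]_(p, q)) X : penrose M X ->
  X = M^T *m (X^T *m X).
Proof.
move=> pX; have [_ h _ _] := pX.
by rewrite mulmxA -(pen_XM_tr pX) h.
Qed.

Lemma pen_XMMT (R : realType) p q (M : 'M[R]_(p, q)) X : penrose M X ->
  X *m M *m M^T = M^T.
Proof.
move=> pX; have [h _ _ _] := pX.
by rewrite (pen_XM_tr pX) -mulmxA -!trmx_mul h.
Qed.

Lemma pen_MX_sym (R : realType) p q (M : 'M[R]_(p, q)) X : penrose M X ->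
  (M *m X)^T = M *m X /\ M *m X *m (M *m X) = M *m X.
Proof. by case=> h _ s _; split => //; rewrite mulmxA h. Qed.

Lemma pen_XM_sym (R : realType) p q (M : 'M[R]_(p, q)) X : penrose M X ->
  (X *m M)^T = X *m M /\ X *m M *m (X *m M) = X *m M.
Proof. by case=> _ h _ s; split => //; rewrite mulmxA h. Qed.

Lemma pen_MXM (R : realType) p q (M : 'M[R]_(p, q)) X : penrose M X ->
  M *m (X *m M) = M.
Proof. by case=> h _ _ _; rewrite mulmxA. Qed.

Lemma proj_range_spec (R : realType) p q (M : 'M[R]_(p, q)) :
  is_orth_proj_range M (proj_range M).
Proof.
rewrite /proj_range; apply: epsilon_spec.
have pX := pinv_spec M; set X := pinv M in pX *.
have [sP iP] := pen_MX_sym pX.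
exists (M *m X); split => //.
rewrite sP; apply/andP; split.
  by rewrite -sP trmx_mul; exact: submxMl.
by rewrite -{1}(pen_MXM pX) mulmxA trmx_mul sP; exact: submxMl.
Qed.

Lemma proj_range_props (R : realType) p q (M : 'M[R]_(p, q)) :
  let P := proj_range M in
  [/\ P^T = P, P *m P = P, P *m M = M & exists Z, P = M *m Z].
Proof.
move=> P; have [iP sP /andP [h1 h2]] := proj_range_spec M.
split => //.
  case/submxP: h2 => D e.
  have eM : M = P *m D^T by rewrite -(trmxK M) e trmx_mul trmxK.
  have -> : P *m M = P *m (P *m D^T) by rewrite -eM.
  by rewrite mulmxA iP -eM.
case/submxP: h1 => D e.
by exists D^T; rewrite -[LHS]trmxK e trmx_mul trmxK.
Qed.

Lemma exists_nz_range (R : realType) m n (A : 'M[R]_(m, n)) : A != 0 ->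
  exists t : 'cV[R]_m, A^T *m t != 0.
Proof.
move=> Anz.
case: (boolP [exists j : 'I_m, A^T *m delta_mx j (0 : 'I_1) != 0]).
  by case/existsP => j h; exists (delta_mx j 0).
rewrite negb_exists => /forallP H.
suff : A^T = 0 by move/eqP; rewrite trmx_eq0 (negbTE Anz).
apply/matrixP => i j; have := H j; rewrite negbK -colE => /eqP /matrixP /(_ i 0).
by rewrite !mxE.
Qed.

Lemma poly_ineq (R : realType) (N p c KT KL : R) : 0 <= N -> 0 <= p -> 0 <= c -> 0 < KT -> 0 < KL ->
  N ^+ 2 <= p * c -> c ^+ 2 <= N * (KT * N) -> 1 <= KL * N ->
  1 <= KL ^+ 2 * KT * p ^+ 2.
Proof.
move=> N0 p0 c0 KT0 KL0 h1 h2 h3.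
have Np : 0 < N by nra.
have h4 : (N ^+ 2) ^+ 2 <= p ^+ 2 * (KT * N ^+ 2).
  have h : (N ^+ 2) ^+ 2 <= (p * c) ^+ 2 by rewrite ler_pXn2r // ?nnegrE ?sqr_ge0 ?mulr_ge0.
  apply: le_trans h _; rewrite exprMn; apply: ler_wpM2l; first exact: sqr_ge0.
  by apply: le_trans h2 _; rewrite mulrCA expr2.
have h5 : N ^+ 2 <= KT * p ^+ 2.
  have N2 : 0 < N ^+ 2 by rewrite exprn_gt0.
  rewrite -(ler_pM2r N2); apply: le_trans h4 _.
  by rewrite mulrA (mulrC (p ^+ 2)) expr2.
have h6 : 1 <= KL ^+ 2 * N ^+ 2.
  have h7 : 1 <= KL * N := h3.
  rewrite -exprMn; apply: le_trans h3 _.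
  rewrite expr2 ler_peMr //; lra.
rewrite -mulrA; apply: le_trans h6 _; apply: ler_wpM2l => //; exact: sqr_ge0.
Qed.

Lemma key (R : realType) m n (A : 'M[R]_(m, n)) : A != 0 ->
  0 < sigma_min_nz A /\
  forall w, pinv A *m A *m w = w ->
    sigma_min_nz A ^+ 2 * dot w w <= dot (A *m w) (A *m w).
Proof.
move=> Anz.
have pX := pinv_spec A; set X := pinv A in pX *.
set Q := X *m A.
have [sQ iQ] := pen_XM_sym pX.
have QAT : Q *m A^T = A^T by exact: pen_XMMT.
have Qr : Q = A^T *m X^T by exact: pen_XM_tr.
set S := A^T *m A.
have sS : S^T = S by rewrite /S trmx_mul trmxK.
have QS : Q *m S = S by rewrite /S mulmxA QAT.
have qE : forall w, dot (A *m w) (A *m w) = dot w (S *m w) by move=> w; rewrite dotMl mulmxA.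
have Vnz : forall w, Q *m w = w -> w != 0 -> 0 < dot (A *m w) (A *m w).
  move=> w Vw wnz; rewrite lt_def dot_ge0 andbT; apply/eqP => /dot_eq0 Aw.
  have : dot w w = 0 by rewrite -{1}Vw Qr -mulmxA dotMl trmxK Aw dot0r.
  by move/dot_eq0 => e; rewrite e eqxx in wnz.
have [t0 t0nz] := exists_nz_range Anz.
set w0 := A^T *m t0.
have Vw0 : Q *m w0 = w0 by rewrite /w0 mulmxA QAT.
have w0p := vnorm_gt0 t0nz.
set U := [set dot (A *m w) (A *m w) | w in [set w | Q *m w = w /\ dot w w = 1]].
have Une : U !=set0.
  exists (dot (A *m ((vnorm w0)^-1 *: w0)) (A *m ((vnorm w0)^-1 *: w0))).
  exists ((vnorm w0)^-1 *: w0) => //; split.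
    by rewrite -scalemxAr Vw0.
  by rewrite dotZl dotZr -vnorm_sq mulrA -expr2 -exprMn mulVf ?expr1n // gt_eqF.
have Ulb : has_lbound U by exists 0 => y [w _ <-]; exact: dot_ge0.
set mu := inf U.
have muLB : forall w, Q *m w = w -> mu * dot w w <= dot (A *m w) (A *m w).
  move=> w Vw; have [->|wnz] := eqVneq w 0; first by rewrite mulmx0 !dot0r mulr0.
  have wp := vnorm_gt0 wnz; set c := (vnorm w)^-1.
  have : U (dot (A *m (c *: w)) (A *m (c *: w))).
    exists (c *: w) => //; split; first by rewrite -scalemxAr Vw.
    by rewrite dotZl dotZr -vnorm_sq mulrA -expr2 -exprMn mulVf ?expr1n // gt_eqF.
  move=> /(ge_inf Ulb); rewrite -/mu -scalemxAr dotZl dotZr mulrA -expr2 => h.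
  rewrite -(vnorm_sq w); apply: le_trans (ler_wpM2r (sqr_ge0 (vnorm w)) h) _.
  by rewrite /c; rewrite le_eqVlt; apply/orP; left; apply/eqP; field; rewrite gt_eqF.
set T := S - mu%:M.
have sT : T^T = T by rewrite /T linearB /= sS tr_scalar_mx.
have TE : forall w : 'cV[R]_n, T *m w = S *m w - mu *: w.
  by move=> w; rewrite /T mulmxBl mul_scalar_mx.
clearbody T.
have QT : forall w : 'cV[R]_n, Q *m w = w -> Q *m (T *m w) = T *m w.
  by move=> w Vw; rewrite TE mulmxBr mulmxA QS -scalemxAr Vw.
have psd : forall w : 'cV[R]_n, Q *m w = w -> 0 <= dot w (T *m w).
  move=> w Vw; rewrite TE dotBr dotZr -qE subr_ge0; exact: muLB.
have psdcs : forall x y : 'cV[R]_n, Q *m x = x -> Q *m y = y ->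
    dot x (T *m y) ^+ 2 <= dot x (T *m x) * dot y (T *m y).
  move=> x y Vx Vy; apply: psd_cs => //; last exact: psd.
  by move=> t; apply: psd; rewrite mulmxDr -scalemxAr Vx Vy.
set T' := T *m Q + (1%:M - Q).
have T'V : forall w : 'cV[R]_n, Q *m w = w -> T' *m w = T *m w.
  by move=> w Vw; rewrite /T' mulmxDl mulmxBl mul1mx -mulmxA Vw subrr addr0.
case: (ker_or_unit T') => [uT' | [x [xnz T'x]]].
  exfalso.
  have [KL [KL0 HL]] := crude_sq (invmx T').
  have [KT [KT0 HT]] := crude_sq T.
  set d := (KL ^+ 2 * KT)^-1.
  have d0 : 0 < d by rewrite invr_gt0 mulr_gt0 // exprn_gt0.
  have lb : lbound U (mu + Num.sqrt d).
    move=> y [w [Vw w1] <-].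
    have p0 := psd w Vw.
    have e1 : dot (A *m w) (A *m w) = mu + dot w (T *m w).
      by rewrite TE dotBr dotZr w1 mulr1 -qE addrC subrK.
    rewrite e1 lerD2l.
    have VTw := QT w Vw.
    have h1 : 1 <= KL * dot (T *m w) (T *m w).
      rewrite -w1; have := HL (T' *m w); rewrite mulKmx // T'V //.
    have h2 := psdcs w (T *m w) Vw VTw.
    have h3 := cs_sq (T *m w) (T *m (T *m w)).
    have h4 := HT (T *m w).
    have eN : dot w (T *m (T *m w)) = dot (T *m w) (T *m w) by rewrite dotMr sT.
    rewrite eN in h2.
    have c0 := psd _ VTw.
    have N0 := dot_ge0 (T *m w).
    have h3' : dot (T *m w) (T *m (T *m w)) ^+ 2 <= dot (T *m w) (T *m w) * (KT * dot (T *m w) (T *m w)).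
      apply: le_trans h3 _; apply: ler_wpM2l => //.
    have := poly_ineq N0 p0 c0 KT0 KL0 h2 h3' h1.
    move=> h5; rewrite -[X in _ <= X](ger0_norm p0) -sqrtr_sqr; apply: ler_wsqrtr.
    have KK : 0 < KL ^+ 2 * KT by rewrite mulr_gt0 // exprn_gt0.
    by rewrite /d -div1r ler_pdivrMr // mulrC.
  have := lb_le_inf Une lb; rewrite -/mu.
  have := sqrtr_gt0 d; rewrite d0 => /= sd; lra.
have Qx : Q *m (Q *m x) = Q *m x by rewrite mulmxA iQ.
have hab : T *m (Q *m x) + (x - Q *m x) = 0.
  by rewrite -T'x /T' mulmxDl mulmxBl mul1mx mulmxA.
have ha : T *m (Q *m x) = 0.
  have := congr1 (mulmx Q) hab.
  by rewrite mulmx0 mulmxDr (QT _ Qx) mulmxBr Qx subrr addr0.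
have xQ : Q *m x = x by move: hab; rewrite ha add0r => /eqP; rewrite subr_eq0 => /eqP.
rewrite xQ in ha.
have Sx : S *m x = mu *: x by apply/eqP; rewrite -subr_eq0 -TE ha.
have qx := Vnz x xQ xnz.
have xp : 0 < dot x x by rewrite lt_def dot_ge0 andbT; apply/eqP => /dot_eq0 e; rewrite e eqxx in xnz.
have mup : 0 < mu.
  move: qx; rewrite qE Sx dotZr => h; rewrite -(pmulr_lgt0 _ xp); done.
have eigx : eigenvalue S mu.
  apply/eigenvalueP; exists x^T; last by rewrite trmx_eq0.
  by rewrite -{1}sS -trmx_mul Sx linearZ.
set L := [set l : R | 0 < l /\ eigenvalue S l].
have infL : inf L = mu.
  apply/eqP; rewrite eq_le; apply/andP; split.
    by apply: ge_inf; [exists 0 => l [l0 _]; exact: ltW | split].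
  apply: lb_le_inf; first by exists mu.
  move=> l [l0 /eigenvalueP [v vS vnz]].
  set e := v^T.
  have Se : S *m e = l *: e by rewrite /e -{1}sS -trmx_mul vS linearZ.
  have Ve : Q *m e = e.
    have -> : e = l^-1 *: (S *m e) by rewrite Se scalerA mulVf ?gt_eqF // scale1r.
    by rewrite -scalemxAr mulmxA QS.
  have enz : e != 0 by rewrite /e trmx_eq0.
  have ep : 0 < dot e e by rewrite lt_def dot_ge0 andbT; apply/eqP => /dot_eq0 h; rewrite h eqxx in enz.
  have := muLB e Ve; rewrite qE Se dotZr ler_pM2r //.
have sig : sigma_min_nz A = Num.sqrt mu by rewrite /sigma_min_nz -/S -/L infL.
split; first by rewrite sig sqrtr_gt0.
by move=> w Vw; rewrite sig sqr_sqrtr; [exact: muLB | exact: ltW].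
Qed.

Lemma fin_ineq (R : realType) (dx a b x bb Pd s nA e d : R) :
  0 < s -> 0 < x -> 0 < bb -> 0 <= a -> 0 <= b -> 0 <= e -> 0 <= d -> 0 <= Pd ->
  dx <= a + b -> s * a <= Pd -> bb <= nA * x -> s ^+ 2 * b <= 2 * e * d ->
  dx / x <= nA / s * (Pd / bb) + (2 * nA / (s ^+ 2 * bb) + 1) * (e + d) ^+ 2.
Proof.
move=> s0 x0 bb0 a0 b0 e0 d0 P0 h1 h2 h3 h4.
have nA0 : 0 < nA by nra.
have s20 : 0 < s ^+ 2 by rewrite exprn_gt0.
have ha : a / x <= nA / s * (Pd / bb).
  rewrite ler_pdivrMr // (_ : nA / s * (Pd / bb) * x = (nA * x) * Pd / (s * bb)); last by field; rewrite ?gt_eqF.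
  rewrite ler_pdivlMr ?mulr_gt0 //; nra.
have hb : b / x <= 2 * nA / (s ^+ 2 * bb) * (e * d).
  rewrite ler_pdivrMr // (_ : 2 * nA / (s ^+ 2 * bb) * (e * d) * x = (2 * e * d) * (nA * x) / (s ^+ 2 * bb)); last by field; rewrite ?gt_eqF.
  rewrite ler_pdivlMr ?mulr_gt0 //.
  have : s ^+ 2 * b * bb <= 2 * e * d * bb by rewrite ler_pM2r.
  have : 2 * e * d * bb <= 2 * e * d * (nA * x) by rewrite ler_wpM2l // !mulr_ge0.
  nra.
have hc : 2 * nA / (s ^+ 2 * bb) * (e * d) <= (2 * nA / (s ^+ 2 * bb) + 1) * (e + d) ^+ 2.
  have k0 : 0 <= 2 * nA / (s ^+ 2 * bb) by rewrite divr_ge0 ?mulr_ge0 ?ltW // mulr_gt0.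
  have : e * d <= (e + d) ^+ 2 by nra.
  have : 0 <= (e + d) ^+ 2 by rewrite sqr_ge0.
  nra.
have : dx / x <= a / x + b / x by rewrite -mulrDl ler_pM2r ?invr_gt0.
lra.
Qed.

Lemma cancel_le (R : realType) (a k c : R) : 0 <= a -> 0 <= c -> k * a ^+ 2 <= a * c -> k * a <= c.
Proof.
move=> a0 c0 h; have [->|anz] := eqVneq a 0; first by rewrite mulr0.
have ap : 0 < a by rewrite lt_def anz a0.
by rewrite -(ler_pM2l ap) mulrCA -expr2.
Qed.

Lemma vnormN (R : realType) k (v : 'cV[R]_k) : vnorm (- v) = vnorm v.
Proof. by rewrite -scaleN1r vnormZ normrN normr1 mul1r. Qed.

Local Close Scope classical_set_scope.
Unset Implicit Arguments.

Theorem corollary1 (R : realType) (m n : nat) (A : 'M[R]_(m, n))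
    (bbar : 'cV[R]_m) :
  (1 <= \rank A)%N ->
  in_range A bbar ->
  bbar != 0 ->
  exists C eps : R, 0 < C /\ 0 < eps /\
    forall (E2 : 'M[R]_(m, n)) (db : 'cV[R]_m),
      let At := A in
      let Bt := A^T + E2^T in
      let b := bbar + db in
      let xmin := pinv A *m bbar in
      let dxmin := pinv (Bt *m At) *m Bt *m b - xmin in
      specnorm E2 + vnorm db <= eps ->
      specnorm (proj_range Bt - proj_range A^T) < 1 ->
      specnorm (proj_range Bt^T - proj_range A) < 1 ->
      vnorm dxmin / vnorm xmin <=
        kappa2 A * (vnorm (proj_range A *m db) / vnorm bbar)
        + C * (specnorm E2 + vnorm db) ^+ 2.
Proof.
move=> rk [y0 hb] bnz.
have Anz : A != 0 by rewrite -mxrank_eq0 -lt0n.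
have [sp Hkey] := key Anz.
set s := sigma_min_nz A in sp Hkey *.
have pX := pinv_spec A; set X := pinv A in pX *.
set Q := X *m A.
set nA := specnorm A.
have nA0 : 0 <= nA := specnorm_ge0 A.
have bbp := vnorm_gt0 bnz.
have s20 : 0 < s ^+ 2 by rewrite exprn_gt0.
exists (2 * nA / (s ^+ 2 * vnorm bbar) + 1), (s ^+ 2 / (2 * (nA + 1))).
split.
  by rewrite ltr_pwDr // divr_ge0 ?mulr_ge0 // ltW // mulr_gt0.
split; first by rewrite divr_gt0 // mulr_gt0 // ltr_pwDr.
move=> E2 db At Bt b xmin dxmin hsmall _ _.
set e := specnorm E2 in hsmall *.
have e0 : 0 <= e := specnorm_ge0 E2.
have db0 := vnorm_ge0 db.
have enA : e * nA <= s ^+ 2 / 2.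
  have e1 : e <= s ^+ 2 / (2 * (nA + 1)) by lra.
  have : e * (nA + 1) <= s ^+ 2 / 2.
    by rewrite -ler_pdivlMr ?ltr_pwDr // -mulrA -invfM.
  nra.
set c := s ^+ 2 - e * nA.
have cp : s ^+ 2 / 2 <= c by rewrite /c; lra.
have c0 : 0 < c by lra.
have [sQ iQ] := pen_XM_sym pX.
have [AXA XAX _ _] := pX.
have QAT : Q *m A^T = A^T by exact: pen_XMMT.
set M := Bt *m A.
have MAt : Bt *m At = M by [].
have pY := pinv_spec M; set Y := pinv M in pY *.
have [MYM _ _ _] := pY.
have inj : forall v : 'cV[R]_n, Q *m v = v -> c * vnorm v <= vnorm (M *m v).
  move=> v Vv.
  have h1 : s ^+ 2 * vnorm v <= vnorm (A^T *m (A *m v)).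
    apply: cancel_le; [exact: vnorm_ge0 | exact: vnorm_ge0 |].
    rewrite vnorm_sq; apply: le_trans (Hkey v Vv) _.
    by rewrite dotMl; exact: cs.
  have h2 : vnorm (A^T *m (A *m v)) <= vnorm (M *m v) + e * (nA * vnorm v).
    have -> : A^T *m (A *m v) = M *m v + - (E2^T *m (A *m v)).
      by rewrite /M /Bt !mulmxDl -!mulmxA addrK.
    apply: le_trans (vnormD _ _) _; rewrite vnormN lerD2l.
    apply: le_trans (specnorm_tr_ub _ _) _; apply: ler_wpM2l => //.
    exact: specnorm_ub.
  rewrite /c; have := vnorm_ge0 v; nra.
have Yr : forall w : 'cV[R]_n, Q *m (Y *m w) = Y *m w.
  move=> w; rewrite (pen_X_range pY) /M trmx_mul !mulmxA QAT.
  done.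
have YM : forall z : 'cV[R]_n, Y *m (M *m z) = X *m (A *m z).
  move=> z; set u := X *m (A *m z).
  have Au : A *m u = A *m z by rewrite /u !mulmxA AXA.
  have Mu : M *m z = M *m u by rewrite /M -!mulmxA Au.
  have Qu : Q *m u = u by rewrite /Q /u !mulmxA XAX.
  set v := u - Y *m (M *m u).
  have Qv : Q *m v = v by rewrite /v mulmxBr Qu Yr.
  have Mv : M *m v = 0 by rewrite /v mulmxBr (mulmxA M Y) (mulmxA (M *m Y)) MYM subrr.
  have := inj v Qv; rewrite Mv.
  have -> : vnorm (0 : 'cV[R]_n) = 0 by rewrite vnormE dot0r sqrtr0.
  move=> h.
  have hv : vnorm v = 0 by apply/eqP; rewrite eq_le vnorm_ge0 andbT -(pmulr_rle0 _ c0).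
  rewrite Mu; have := vnorm_eq0 hv; rewrite /v => /eqP; rewrite subr_eq0 => /eqP <-.
  done.
have [sP iP PA [Z PZ]] := proj_range_props A.
set P := proj_range A in sP iP PA PZ *.
have ATP : A^T *m P = A^T by rewrite -{1}sP -trmx_mul PA.
have [sMY iMY] := pen_MX_sym pY.
have Ybound : forall w : 'cV[R]_n, c * vnorm (Y *m w) <= vnorm w.
  move=> w; apply: le_trans (inj _ (Yr w)) _; rewrite mulmxA; exact: proj_ub.
have h0 : Bt *m (db - P *m db) = E2^T *m (db - P *m db).
  by rewrite /Bt mulmxDl mulmxBr mulmxA ATP subrr add0r.
have hP : Y *m Bt *m (P *m db) = X *m (P *m db).
  by rewrite PZ -(mulmxA A Z db) -YM /M !mulmxA.
have hdb : Y *m Bt *m db = X *m (P *m db) + Y *m (E2^T *m (db - P *m db)).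
  by rewrite -hP -h0 (mulmxA Y Bt) -mulmxDr (addrC (P *m db)) subrK.
have hbb0 : Y *m Bt *m bbar = X *m bbar.
  by rewrite hb -YM /M !mulmxA.
have dxE : dxmin = X *m (P *m db) + Y *m (E2^T *m (db - P *m db)).
  rewrite /dxmin /xmin /b MAt -/Y mulmxDr hbb0 hdb.
  by rewrite addrC addrA (addrC (- _)) subrr add0r.
set g := X *m (P *m db).
set w := E2^T *m (db - P *m db).
have Qg : Q *m g = g by rewrite /Q /g PZ !mulmxA XAX.
have Ag : A *m g = P *m db by rewrite /g PZ !mulmxA AXA.
have hg : s * vnorm g <= vnorm (P *m db).
  have s0 : 0 <= s := ltW sp.
  rewrite -(ler_pXn2r (_ : (0 < 2)%N)) ?nnegrE ?mulr_ge0 ?vnorm_ge0 //.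
  by rewrite exprMn !vnorm_sq -Ag; exact: Hkey.
have hpr : vnorm (db - P *m db) <= vnorm db.
  have -> : db - P *m db = (1%:M - P) *m db by rewrite mulmxBl mul1mx.
  apply: proj_ub; first by rewrite linearB /= trmx1 sP.
  by rewrite mulmxBl !mulmxBr !mul1mx !mulmx1 iP subrr subr0.
have hw : vnorm w <= e * vnorm db.
  apply: le_trans (specnorm_tr_ub _ _) _; apply: ler_wpM2l => //; exact: hpr.
have hYw := Ybound w.
set x0 := X *m bbar.
have Ax0 : A *m x0 = bbar by rewrite /x0 hb !mulmxA AXA.
have hbb : vnorm bbar <= nA * vnorm x0 by rewrite -{1}Ax0; exact: specnorm_ub.
have x0nz : x0 != 0 by apply: contraNneq bnz => ex; rewrite -Ax0 ex mulmx0.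
have x0p := vnorm_gt0 x0nz.
have hYw2 : s ^+ 2 * vnorm (Y *m w) <= 2 * e * vnorm db.
  have := vnorm_ge0 (Y *m w); nra.
rewrite dxE /kappa2 -/nA -/s.
exact: (fin_ineq sp x0p bbp (vnorm_ge0 g) (vnorm_ge0 (Y *m w)) e0 db0 (vnorm_ge0 _) (vnormD _ _) hg hbb hYw2).
Qed.
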